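(* If $C\subseteq\mathbb{R}$ is infinite and $|\mathbb{R}\setminus C|=\mathfrak{c}$, then there is a two-point selection $f$ on $\mathbb{R}$ such that $C$ is not closed in $\tau_f$ and $C$ is not a $G_\delta$-set in $\tau_f$.
   Context: $\mathfrak{c}=|\mathbb{R}|$. A two-point selection on $\mathbb{R}$ is a function $f$ from the set of two-element subsets of $\mathbb{R}$ to $\mathbb{R}$ with $f(F)\in F$. Write $r<_f s$ if $f(\{r,s\})=r$ ($r\ne s$), $(\leftarrow,r)_f=\{x: x<_f r\}$, $(r,\rightarrow)_f=\{x: r<_f x\}$. The topology $\tau_f$ on $\mathbb{R}$ is generated (as a subbase) by all sets $(\leftarrow,r)_f$, $(r,\rightarrow)_f$, $r\in\mathbb{R}$. A $G_\delta$-set is a countable intersection of open sets. *)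

(* Defs.v *)
From Stdlib Require Export Reals List.
Open Scope R_scope.

(* A two-point selection on R: a function on two-element subsets {r,s}
   (r <> s) picking an element of the pair.  Represented by a binary
   function, symmetric on distinct arguments; its values on the diagonal
   are irrelevant. *)
Definition two_point_selection (f : R -> R -> R) : Prop :=
  forall r s : R, r <> s -> f r s = f s r /\ (f r s = r \/ f r s = s).

Definition lt_sel (f : R -> R -> R) (r s : R) : Prop := r <> s /\ f r s = r.

Definition ray_left (f : R -> R -> R) (r : R) : R -> Prop := fun x => lt_sel f x r.
Definition ray_right (f : R -> R -> R) (r : R) : R -> Prop := fun x => lt_sel f r x.

Definition subbasic (f : R -> R -> R) (S : R -> Prop) : Prop :=
  exists r : R, (forall x, S x <-> ray_left f r x) \/ (forall x, S x <-> ray_right f r x).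

(* open sets of the topology generated by the subbase: unions of finite
   intersections of subbasic sets (empty intersection = R). *)
Definition tau_open (f : R -> R -> R) (U : R -> Prop) : Prop :=
  forall x, U x ->
    exists l : list (R -> Prop),
      (forall S, In S l -> subbasic f S /\ S x) /\
      (forall y, (forall S, In S l -> S y) -> U y).

Definition tau_closed (f : R -> R -> R) (C : R -> Prop) : Prop :=
  tau_open f (fun x => ~ C x).

Definition tau_Gdelta (f : R -> R -> R) (C : R -> Prop) : Prop :=
  exists U : nat -> R -> Prop,
    (forall n, tau_open f (U n)) /\ (forall x, C x <-> forall n, U n x).

Definition infinite_set (C : R -> Prop) : Prop :=
  ~ exists l : list R, forall x, C x -> In x l.

Definition card_continuum (A : R -> Prop) : Prop :=
  exists g : R -> R,
    (forall y, A (g y)) /\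
    (forall y1 y2, g y1 = g y2 -> y1 = y2) /\
    (forall x, A x -> exists y, g y = x).

(* Main.v *)
Require Import Defs.
From Stdlib Require Import Arith Bool Lra Lia ClassicalEpsilon FunctionalExtensionality Cantor.
Open Scope nat_scope.

Definition V := nat -> bool.
Definition tag (u : V) (m : nat) : bool := u (2 * m).
Definition L (u : V) (k : nat) : V := fun j => u (S (2 * Cantor.to_nat (k, j))).
Definition mk (t : nat -> bool) (s : nat -> V) : V :=
  fun n => if Nat.even n then t (Nat.div2 n)
           else let (k, j) := Cantor.of_nat (Nat.div2 n) in s k j.

Lemma tag_mk t s m : tag (mk t s) m = t m.
Proof.
  unfold tag, mk. replace (Nat.even (2*m)) with true by (rewrite Nat.even_mul; reflexivity).
  rewrite Nat.div2_double. reflexivity.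
Qed.

Lemma L_mk t s k : L (mk t s) k = s k.
Proof.
  apply functional_extensionality. intros j. unfold L, mk.
  replace (Nat.even (S (2 * Cantor.to_nat (k, j)))) with false
    by (rewrite Nat.even_succ, Nat.odd_mul; reflexivity).
  rewrite Nat.div2_succ_double, Cantor.cancel_of_to. reflexivity.
Qed.

Definition BV (u v : V) : Prop := exists k, L u k = v /\ forall j, j <= k -> L v j <> u.

Lemma BV_antisym u v : BV u v -> BV v u -> False.
Proof.
  intros [k [H1 H2]] [k' [H3 H4]].
  destruct (le_lt_dec k' k).
  - apply (H2 k'); auto.
  - apply (H4 k); [lia | auto].
Qed.

Lemma BV_dom (s : nat -> V) : exists u, forall k, u <> s k /\ BV u (s k).
Proof.
  set (G := fun m => let (k, j) := Cantor.of_nat m in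
                     match j with O => s k | S j' => L (s k) j' end).
  set (t := fun m => negb (tag (G m) m)).
  exists (mk t s).
  assert (HG : forall m, mk t s <> G m).
  { intros m Heq. pose proof (tag_mk t s m) as Ht. rewrite Heq in Ht.
    unfold t in Ht. destruct (tag (G m) m); discriminate. }
  intros k. split.
  - intros Heq. apply (HG (Cantor.to_nat (k, 0))). unfold G. rewrite Cantor.cancel_of_to. exact Heq.
  - exists k. split; [apply L_mk|].
    intros j _ Heq. apply (HG (Cantor.to_nat (k, S j))). unfold G.
    rewrite Cantor.cancel_of_to. symmetry. exact Heq.
Qed.
Open Scope R_scope.

Fixpoint ps (b : nat -> bool) (M : nat) : R :=
  match M with
  | O => 0
  | S M => ps b M + (if b M then (/3)^M else 0)
  end.

Lemma pow3_pos n : 0 < (/3)^n.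
Proof. apply pow_lt. lra. Qed.

Lemma term_bounds (b : nat -> bool) n : 0 <= (if b n then (/3)^n else 0) <= (/3)^n.
Proof. pose proof (pow3_pos n). destruct (b n); lra. Qed.

Lemma ps_mono b M K : ps b M <= ps b (M + K).
Proof.
  induction K.
  - rewrite Nat.add_0_r. lra.
  - rewrite Nat.add_succ_r. simpl. pose proof (term_bounds b (M+K)). lra.
Qed.

Lemma ps_tail b K M : ps b (K + M) <= ps b K + 3/2 * ((/3)^K - (/3)^(K+M)).
Proof.
  induction M.
  - rewrite Nat.add_0_r. lra.
  - rewrite Nat.add_succ_r. simpl. pose proof (term_bounds b (K+M)).
    set (q := (/3)^(K+M)) in *. lra.
Qed.

Lemma ps_bound b M : ps b M <= 3/2.
Proof.
  pose proof (ps_tail b 0 M). simpl in H. pose proof (pow3_pos M). lra.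
Qed.

Definition PS b : R -> Prop := fun x => exists M, x = ps b M.

Lemma PS_bound b : bound (PS b).
Proof. exists (3/2). intros x [M ->]. apply ps_bound. Qed.

Lemma PS_ne b : exists x, PS b x.
Proof. exists 0. exists O. reflexivity. Qed.

Definition e (b : nat -> bool) : R := proj1_sig (completeness (PS b) (PS_bound b) (PS_ne b)).

Lemma e_lub b : is_lub (PS b) (e b).
Proof. unfold e. exact (proj2_sig _). Qed.

Lemma e_ge b M : ps b M <= e b.
Proof.
  destruct (e_lub b) as [Hub _]. apply Hub. exists M. reflexivity.
Qed.

Lemma e_le b B : (forall M, ps b M <= B) -> e b <= B.
Proof.
  intros H. destruct (e_lub b) as [_ Hl]. apply Hl. intros x [M ->]. apply H.
Qed.

Lemma e_bound b : e b <= 3/2.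
Proof. apply e_le. apply ps_bound. Qed.

Lemma ps_agree b b' n : (forall k, (k < n)%nat -> b k = b' k) -> ps b n = ps b' n.
Proof.
  induction n; intros H; simpl; [reflexivity|].
  rewrite IHn by (intros; apply H; lia). rewrite (H n) by lia. reflexivity.
Qed.

Lemma e_key b b' n : b n = true -> b' n = false -> (forall k, (k < n)%nat -> b k = b' k) ->
  e b' < e b.
Proof.
  intros H1 H2 Hag.
  pose proof (e_ge b (S n)) as Hb. simpl in Hb. rewrite H1 in Hb.
  assert (Hb' : e b' <= ps b n + /2 * (/3)^n).
  { apply e_le. intros M. pose proof (pow3_pos n).
    destruct (Compare_dec.le_lt_dec M n) as [HM|HM].
    - pose proof (ps_mono b' M (n - M)) as Hm. replace (M + (n-M))%nat with n in Hm by lia.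
      rewrite (ps_agree b b' n Hag). lra.
    - replace M with (S n + (M - S n))%nat by lia.
      pose proof (ps_tail b' (S n) (M - S n)).
      pose proof (pow3_pos (S n + (M - S n))).
      simpl in H0. rewrite H2 in H0. rewrite (ps_agree b b' n Hag).
      simpl. simpl in H3. set (q := (/3)^n) in *. set (q2 := (/ 3) ^ (n + (M - S n))) in *. set (T := if b' (n + (M - S n))%nat then q2 else 0) in *. set (P := ps b' (n + (M - S n))) in *. lra. }
  pose proof (pow3_pos n). lra.
Qed.

Lemma e_inj b b' : e b = e b' -> b = b'.
Proof.
  intros He. apply functional_extensionality.
  assert (H : forall n k, (k < n)%nat -> b k = b' k).
  { induction n; intros k Hk; [lia|].
    destruct (Nat.eq_dec k n) as [->|Hne]; [|apply IHn; lia].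
    destruct (b n) eqn:E1, (b' n) eqn:E2; auto.
    - pose proof (e_key b b' n E1 E2 IHn). lra.
    - assert (IH' : forall k, (k < n)%nat -> b' k = b k) by (intros; symmetry; auto).
      pose proof (e_key b' b n E2 E1 IH'). lra. }
  intros x. apply (H (S x)). lia.
Qed.

Record data := { c0 : R; W : V -> R; pp : R; d : nat -> R }.

Definition good (C : R -> Prop) (D : data) : Prop :=
  C (c0 D) /\ (forall u, ~ C (W D u)) /\ (forall u v, W D u = W D v -> u = v) /\
  ~ C (pp D) /\ (forall u, pp D <> W D u) /\
  (forall n, C (d D n)) /\ (forall n m, d D n = d D m -> n = m) /\ (forall n, d D n <> c0 D).

Definition emi := excluded_middle_informative.

Definition cls (D : data) (x : R) : nat :=
  if emi (x = c0 D) then 0%nat else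
  if emi (exists u, x = W D u) then 1%nat else
  if emi (x = pp D) then 2%nat else
  if emi (exists n, x = d D n) then 3%nat else 4%nat.

Definition pre (D : data) (x : R) : V := epsilon (inhabits (fun _ => false)) (fun u => x = W D u).
Definition idx (D : data) (x : R) : nat := epsilon (inhabits 0%nat) (fun n => x = d D n).

Definition within (D : data) (x y : R) : Prop :=
  match cls D x with
  | 1%nat => BV (pre D x) (pre D y) \/ (~ BV (pre D x) (pre D y) /\ ~ BV (pre D y) (pre D x) /\ x < y)
  | 3%nat => (idx D y < idx D x)%nat
  | _ => x < y
  end.

Definition beats (D : data) (x y : R) : Prop :=
  (cls D x < cls D y)%nat \/ (cls D x = cls D y /\ within D x y).

Definition fsel (D : data) (x y : R) : R := if emi (beats D x y) then x else y.


Lemma cls_inv D x :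
  (cls D x = 0%nat -> x = c0 D) /\ (cls D x = 1%nat -> exists u, x = W D u) /\
  (cls D x = 2%nat -> x = pp D) /\ (cls D x = 3%nat -> exists n, x = d D n) /\ (cls D x <= 4)%nat.
Proof.
  unfold cls. destruct (emi (x = c0 D)); [repeat split; intros; auto; try discriminate; lia|].
  destruct (emi (exists u, x = W D u)); [repeat split; intros; auto; try discriminate; lia|].
  destruct (emi (x = pp D)); [repeat split; intros; auto; try discriminate; lia|].
  destruct (emi (exists n, x = d D n)); repeat split; intros; auto; try discriminate; lia.
Qed.


Lemma cls_c0 C D : good C D -> cls D (c0 D) = 0%nat.
Proof. intros _. unfold cls. destruct (emi _); congruence. Qed.

Lemma cls_W C D u : good C D -> cls D (W D u) = 1%nat.
Proof.
  intros (Hc0 & HW & _). unfold cls.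
  destruct (emi _) as [e|]; [rewrite <- e in Hc0; exfalso; eapply HW; eauto|].
  destruct (emi _) as [|nn]; [reflexivity| exfalso; apply nn; eauto].
Qed.

Lemma cls_p C D : good C D -> cls D (pp D) = 2%nat.
Proof.
  intros (Hc0 & HW & _ & Hp & HpW & _). unfold cls.
  destruct (emi _) as [e|]; [rewrite <- e in Hc0; contradiction|].
  destruct (emi _) as [[u e]|]; [exfalso; eapply HpW; eauto|].
  destruct (emi _) as [|n1]; [reflexivity|congruence].
Qed.

Lemma cls_d C D n : good C D -> cls D (d D n) = 3%nat.
Proof.
  intros (Hc0 & HW & _ & Hp & HpW & Hd & _ & Hdc). unfold cls.
  destruct (emi _) as [e|]; [exfalso; eapply Hdc; eauto|].
  destruct (emi _) as [[u e]|]; [exfalso; eapply HW; rewrite <- e; eauto|].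
  destruct (emi _) as [e|]; [exfalso; apply Hp; rewrite <- e; auto|].
  destruct (emi _) as [|nq]; [reflexivity| exfalso; apply nq; eauto].
Qed.

Lemma pre_W C D u : good C D -> pre D (W D u) = u.
Proof.
  intros (_ & _ & HWi & _). unfold pre.
  pose proof (epsilon_spec (inhabits (fun _ => false)) (fun v => W D u = W D v) (ex_intro _ u eq_refl)).
  symmetry. apply HWi. exact H.
Qed.

Lemma idx_d C D n : good C D -> idx D (d D n) = n.
Proof.
  intros (_ & _ & _ & _ & _ & _ & Hdi & _). unfold idx.
  pose proof (epsilon_spec (inhabits 0%nat) (fun m => d D n = d D m) (ex_intro _ n eq_refl)).
  symmetry. apply Hdi. exact H.
Qed.

Lemma tournament C D x y : good C D -> x <> y ->
  (beats D x y \/ beats D y x) /\ ~ (beats D x y /\ beats D y x).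
Proof.
  intros HG Hxy. unfold beats.
  destruct (Nat.lt_trichotomy (cls D x) (cls D y)) as [Hl|[He|Hl]].
  - split; [left; left; auto|]. intros [_ [H|[H _]]]; lia.
  - assert (Hw : (within D x y \/ within D y x) /\ ~ (within D x y /\ within D y x)).
    { unfold within. rewrite <- He.
      destruct (cls_inv D x) as (H0 & H1 & H2 & H3 & H4).
      destruct (cls D x) as [|[|[|[|k]]]] eqn:Ec.
      - split; [destruct (Rtotal_order x y) as [|[|]]; tauto|lra].
      - destruct (H1 eq_refl) as [u ->].
        destruct (cls_inv D y) as (G0 & G1 & _). rewrite <- He in G1.
        destruct (G1 eq_refl) as [v ->].
        rewrite (pre_W C D u HG), (pre_W C D v HG).
        pose proof (BV_antisym u v).
        split; [|intros [[A|A] [B|B]]; try tauto; lra].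
        destruct (classic (BV u v)); [tauto|].
        destruct (classic (BV v u)); [tauto|].
        destruct (Rtotal_order (W D u) (W D v)) as [|[|]]; tauto.
      - split; [destruct (Rtotal_order x y) as [|[|]]; tauto|lra].
      - destruct (H3 eq_refl) as [n ->].
        destruct (cls_inv D y) as (_ & _ & _ & G3 & _). rewrite <- He in G3.
        destruct (G3 eq_refl) as [m ->].
        rewrite (idx_d C D n HG), (idx_d C D m HG).
        assert (n <> m) by (intros ->; auto).
        split; lia.
      - split; [destruct (Rtotal_order x y) as [|[|]]; tauto|lra]. }
    split; [destruct Hw as [[|] _]; [left|right]; right; split; auto|].
    intros [[A|[_ A]] [B|[_ B]]]; try lia. tauto.
  - split; [right; left; auto|]. intros [[H|[H _]] _]; lia.
Qed.

Lemma fsel_tps C D : good C D -> two_point_selection (fsel D).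
Proof.
  intros HG r s Hrs. unfold fsel.
  destruct (tournament C D r s HG Hrs) as [[H|H] Hn].
  - destruct (emi (beats D r s)); [|contradiction].
    destruct (emi (beats D s r)); [tauto|]. auto.
  - destruct (emi (beats D r s)); [tauto|].
    destruct (emi (beats D s r)); [|contradiction]. auto.
Qed.

Lemma lt_sel_iff D x y : lt_sel (fsel D) x y <-> x <> y /\ beats D x y.
Proof.
  unfold lt_sel, fsel. destruct (emi (beats D x y)); split; intros [A B]; auto.
  - exfalso; auto.
  - contradiction.
Qed.

Lemma not_closed C D : good C D -> ~ tau_closed (fsel D) C.
Proof.
  intros HG Hcl.
  pose proof HG as (Hc0 & HW & HWi & Hp & HpW & Hd & Hdi & Hdc).
  destruct (Hcl (pp D) Hp) as [l [Hl1 Hl2]].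
  assert (Hs : forall S, subbasic (fsel D) S -> S (pp D) -> exists N, forall n, (N <= n)%nat -> S (d D n)).
  { intros S [r [Hr|Hr]] HS.
    - apply Hr in HS. apply lt_sel_iff in HS as [Hne Hb].
      unfold beats in Hb. rewrite (cls_p C D HG) in Hb.
      destruct (cls_inv D r) as (G0 & G1 & G2 & G3 & G4).
      destruct Hb as [Hb|[Hb _]]; [|exfalso; apply Hne; symmetry; apply G2; auto].
      destruct (Nat.eq_dec (cls D r) 3) as [E3|E3].
      + destruct (G3 E3) as [m ->]. exists (m+1)%nat. intros n Hn. apply Hr, lt_sel_iff.
        split; [intros E; apply Hdi in E; lia|].
        right. rewrite (cls_d C D n HG), (cls_d C D m HG). split; auto.
        unfold within. rewrite (cls_d C D n HG), (idx_d C D n HG), (idx_d C D m HG). lia.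
      + exists 0%nat. intros n _. apply Hr, lt_sel_iff.
        assert (cls D r = 4%nat) by lia.
        split; [intros E; rewrite <- E, (cls_d C D n HG) in H; discriminate|].
        left. rewrite (cls_d C D n HG). lia.
    - apply Hr in HS. apply lt_sel_iff in HS as [Hne Hb].
      unfold beats in Hb. rewrite (cls_p C D HG) in Hb.
      destruct (cls_inv D r) as (G0 & G1 & G2 & G3 & G4).
      destruct Hb as [Hb|[Hb _]]; [|exfalso; apply Hne; apply G2; auto].
      exists 0%nat. intros n _. apply Hr, lt_sel_iff.
      split; [intros E; rewrite E, (cls_d C D n HG) in Hb; lia|].
      left. rewrite (cls_d C D n HG). lia. }
  assert (HN : exists N, forall n, (N <= n)%nat -> forall S, In S l -> S (d D n)).
  { clear Hl2. induction l as [|S l IH].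
    - exists 0%nat. intros n _ S [].
    - destruct IH as [N1 HN1]; [intros; apply Hl1; right; auto|].
      destruct (Hl1 S (or_introl eq_refl)) as [Hsb HSp].
      destruct (Hs S Hsb HSp) as [N2 HN2].
      exists (N1 + N2)%nat. intros n Hn S' [<-|HS'].
      + apply HN2. lia.
      + apply HN1; auto. lia. }
  destruct HN as [N HN].
  apply (Hl2 (d D N)); [apply HN; lia|apply Hd].
Qed.

Lemma not_Gdelta C D : good C D -> ~ tau_Gdelta (fsel D) C.
Proof.
  intros HG [U [HUo HU]].
  pose proof HG as (Hc0 & HW & HWi & Hp & HpW & Hd & Hdi & Hdc).
  assert (HUc : forall n, U n (c0 D)) by (apply HU; auto).
  set (lf := fun n => proj1_sig (constructive_indefinite_description _ (HUo n (c0 D) (HUc n)))).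
  assert (Hlf : forall n, (forall S, In S (lf n) -> subbasic (fsel D) S /\ S (c0 D)) /\
                           (forall y, (forall S, In S (lf n) -> S y) -> U n y)).
  { intros n. unfold lf. exact (proj2_sig (constructive_indefinite_description _ (HUo n (c0 D) (HUc n)))). }
  set (v0 := (fun _ : nat => false) : V).
  set (s := fun k => let (n, i) := Cantor.of_nat k in
             epsilon (inhabits v0) (fun v => forall x, nth i (lf n) (fun _ => False) x <-> ray_left (fsel D) (W D v) x)).
  destruct (BV_dom s) as [u Hu].
  apply (HW u). apply HU. intros n. apply (proj2 (Hlf n)). intros S HS.
  destruct (proj1 (Hlf n) S HS) as [[r [Hr|Hr]] HSc].
  - apply Hr. apply Hr in HSc. apply lt_sel_iff in HSc as [Hne Hb].
    destruct (cls_inv D r) as (G0 & G1 & G2 & G3 & G4).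
    destruct (Nat.eq_dec (cls D r) 1) as [E1|E1].
    + destruct (G1 E1) as [v ->].
      destruct (In_nth _ _ (fun _ => False) HS) as [i [_ Hi]].
      assert (Hsk : forall x, S x <-> ray_left (fsel D) (W D (s (Cantor.to_nat (n, i)))) x).
      { unfold s. rewrite Cantor.cancel_of_to. rewrite <- Hi.
        apply (epsilon_spec (inhabits v0) (fun v => forall x, nth i (lf n) (fun _ => False) x <-> ray_left (fsel D) (W D v) x)).
        exists v. rewrite Hi. exact Hr. }
      apply Hr, Hsk. unfold ray_left. apply lt_sel_iff.
      destruct (Hu (Cantor.to_nat (n, i))) as [Hne' HB].
      split; [intros E; apply HWi in E; auto|].
      right. rewrite (cls_W C D u HG), (cls_W C D _ HG). split; auto.
      unfold within. rewrite (cls_W C D u HG), (pre_W C D u HG), (pre_W C D _ HG). left. exact HB.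
    + apply lt_sel_iff. unfold beats in Hb. rewrite (cls_c0 C D HG) in Hb.
      assert (cls D r <> 0%nat) by (intros E; apply Hne; symmetry; apply G0; auto).
      split; [intros E; rewrite <- E, (cls_W C D u HG) in E1; auto|].
      left. rewrite (cls_W C D u HG). lia.
  - exfalso. apply Hr in HSc. apply lt_sel_iff in HSc as [Hne Hb].
    unfold beats in Hb. rewrite (cls_c0 C D HG) in Hb.
    destruct (cls_inv D r) as (G0 & _).
    destruct Hb as [Hb|[Hb _]]; [lia|]. apply Hne, G0; auto.
Qed.

Definition next (C : R -> Prop) (l : list R) : R :=
  epsilon (inhabits 0) (fun x => C x /\ ~ In x l).

Fixpoint seqL (C : R -> Prop) (n : nat) : list R :=
  match n with O => nil | S n => next C (seqL C n) :: seqL C n end.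

Definition dd C n := next C (seqL C n).

Lemma dd_spec C n : infinite_set C -> C (dd C n) /\ ~ In (dd C n) (seqL C n).
Proof.
  intros Hinf. unfold dd, next. apply epsilon_spec.
  apply NNPP. intros Hn. apply Hinf. exists (seqL C n). intros x Hx.
  apply NNPP. intros Hx'. apply Hn. exists x. auto.
Qed.

Lemma dd_in C k n : (k < n)%nat -> In (dd C k) (seqL C n).
Proof.
  induction n; intros H; [lia|]. simpl.
  destruct (Nat.eq_dec k n) as [->|]; [left; reflexivity|right; apply IHn; lia].
Qed.

Lemma dd_inj C n m : infinite_set C -> dd C n = dd C m -> n = m.
Proof.
  intros Hinf E. destruct (Nat.lt_trichotomy n m) as [H|[H|H]]; auto; exfalso.
  - apply (proj2 (dd_spec C m Hinf)). rewrite <- E. apply dd_in; auto.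
  - apply (proj2 (dd_spec C n Hinf)). rewrite E. apply dd_in; auto.
Qed.

Theorem theorem3p17 (C : R -> Prop) :
  infinite_set C ->
  card_continuum (fun x => ~ C x) ->
  exists f : R -> R -> R,
    two_point_selection f /\ ~ tau_closed f C /\ ~ tau_Gdelta f C.
Proof.
  intros Hinf [g [Hg1 [Hg2 _]]].
  set (D := {| c0 := dd C 0; W := fun u => g (e u); pp := g 2; d := fun n => dd C (S n) |}).
  assert (HG : good C D).
  { unfold good; simpl. repeat split.
    - apply (dd_spec C 0 Hinf).
    - intros u. apply Hg1.
    - intros u v H. apply e_inj, Hg2, H.
    - apply Hg1.
    - intros u H. apply Hg2 in H. pose proof (e_bound u). lra.
    - intros n. apply (dd_spec C (S n) Hinf).
    - intros n m H. apply dd_inj in H; auto.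
    - intros n H. apply dd_inj in H; auto. discriminate. }
  exists (fsel D). split; [apply (fsel_tps C D HG)|].
  split; [apply (not_closed C D HG)|apply (not_Gdelta C D HG)].
Qed.
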